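(* Let $k\ge3$ and let $\sigma,\tau\in\mathfrak S_{k-2}$ be consecutive patterns with $A_\sigma(z)=A_\tau(z)$. Then $A_{1\text{-}\sigma\text{-}k}(z)=A_{1\text{-}\tau\text{-}k}(z)$, where for $\sigma=\sigma_1\cdots\sigma_{k-2}$, $1\text{-}\sigma\text{-}k$ denotes the generalized pattern $1\text{-}(\sigma_1+1)\cdots(\sigma_{k-2}+1)\text{-}k$. In particular $A_{1\text{-}23\text{-}4}(z)=A_{1\text{-}32\text{-}4}(z)$.
   Context: $\mathfrak S_n$ is the symmetric group on $\{1,\dots,n\}$, permutations in one-line notation. A generalized pattern of length $m$ is a permutation $\sigma_1\cdots\sigma_m\in\mathfrak S_m$ with, between each pair of adjacent entries, either a dash ''-'' or nothing. A permutation $\pi\in\mathfrak S_n$ contains it if there are indices $i_1<\dots<i_m$ with $i_{j+1}=i_j+1$ whenever there is no dash between $\sigma_j$ and $\sigma_{j+1}$, and with $\pi_{i_a}<\pi_{i_b}$ iff $\sigma_a<\sigma_b$ for all $a,b$; otherwise $\pi$ avoids it. A consecutive pattern has no dashes. $\alpha_n(\sigma)$ is the number of permutations in $\mathfrak S_n$ avoiding $\sigma$ ($\alpha_0=1$) and $A_\sigma(z)=\sum_{n\ge0}\alpha_n(\sigma)z^n/n!$. *)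

(* Defs.v *)
From mathcomp Require Import all_boot all_order all_algebra all_fingroup.
Set Implicit Arguments. Unset Strict Implicit. Unset Printing Implicit Defensive.
Import GRing.Theory.

(* A generalized pattern of length m: one-line word w = sigma_1 ... sigma_m
   (1-based values) and a list d of m-1 booleans, d_j = true iff there is a
   dash between sigma_(j+1) and sigma_(j+2) (0-based j). *)
Definition gpat := (seq nat * seq bool)%type.

Definition gcontains (P : gpat) (n : nat) (pi : 'S_n) : bool :=
  let w := P.1 in let d := P.2 in
  [exists f : {ffun 'I_(size w) -> 'I_n},
     [forall a : 'I_(size w), forall b : 'I_(size w),
        ((a < b)%N ==> (f a < f b)%N) &&
        (((pi (f a) : nat) < pi (f b))%N == (nth 0 w a < nth 0 w b)%N)] &&
     [forall a : 'I_(size w), forall b : 'I_(size w),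
        (((b : nat) == a.+1) && ~~ nth true d a) ==> ((f b : nat) == (f a).+1)]].

Definition alpha (P : gpat) (n : nat) : nat :=
  #|[set pi : 'S_n | ~~ gcontains P pi]|.

(* The exponential generating function A_P(z), as a formal power series,
   i.e. its coefficient sequence alpha_n(P)/n!. *)
Definition egf (P : gpat) : nat -> rat :=
  fun n => ((alpha P n)%:R / (n`!)%:R)%R.

Definition oneline (m : nat) (s : 'S_m) : seq nat :=
  [seq (s i).+1 | i <- enum 'I_m].

Definition consec_pat (m : nat) (s : 'S_m) : gpat :=
  (oneline s, nseq m.-1 false).

Definition wrap_pat (k : nat) (s : 'S_(k - 2)) : gpat :=
  (1 :: [seq x.+1 | x <- oneline s] ++ [:: k],
   true :: nseq (k - 3) false ++ [:: true]).

(* Main.v *)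
Require Import Defs.
From mathcomp Require Import all_boot all_order all_algebra all_fingroup.
From mathcomp Require Import zify.
From Stdlib Require Import FunctionalExtensionality.
Set Implicit Arguments. Unset Strict Implicit. Unset Printing Implicit Defensive.

Definition lrmin (s : seq nat) i := all (fun x => nth 0 s i < x) (take i s).
Definition rlmax (s : seq nat) i := all (fun x => x < nth 0 s i) (drop i.+1 s).
Definition spf s i := lrmin s i || rlmax s i.

Lemma take_addl (T : Type) (A Y : seq T) p : take (size A + p) (A ++ Y) = A ++ take p Y.
Proof. by elim: A => //= x A ->. Qed.
Lemma drop_addl (T : Type) (A Y : seq T) p : drop (size A + p) (A ++ Y) = drop p Y.
Proof. by elim: A. Qed.
Lemma nth_addl (T : Type) x0 (A Y : seq T) p : nth x0 (A ++ Y) (size A + p) = nth x0 Y p.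
Proof. by elim: A. Qed.
Lemma take_catl' (T : Type) (A Y : seq T) p : p <= size A -> take p (A ++ Y) = take p A.
Proof. elim: A p => [|x A IH] [|p] //=; [by rewrite take0 | by move=> H; rewrite IH]. Qed.
Lemma drop_catl' (T : Type) (A Y : seq T) p : p <= size A -> drop p (A ++ Y) = drop p A ++ Y.
Proof. elim: A p => [|x A IH] [|p] //=; [by rewrite drop0 | by move=> H; rewrite IH]. Qed.

Lemma spf_big s i : size s <= i -> spf s i.
Proof. by move=> H; rewrite /spf /rlmax drop_oversize ?orbT //; lia. Qed.
Lemma spf_small s i : ~~ spf s i -> i < size s.
Proof. by apply: contraR; rewrite -leqNgt; apply: spf_big. Qed.
Lemma spf0 s : spf s 0.
Proof. by rewrite /spf /lrmin take0. Qed.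

Section Mid.
Variables (A r B : seq nat).
Hypothesis ns : forall i, size A <= i < size A + size r -> ~~ spf (A ++ r ++ B) i.

Lemma below p : p < size r -> exists2 x, x \in A & x <= nth 0 r p.
Proof.
elim/ltn_ind: p => p IH Hp.
have := ns (i := size A + p); rewrite leq_addr ltn_add2l => /(_ Hp).
rewrite /spf negb_or => /andP [H _]; move: H.
rewrite /lrmin nth_addl take_addl nth_cat Hp take_catl' ?(ltnW Hp) //.
case/allPn => x; rewrite mem_cat -leqNgt => /orP [xA xle|xt xle].
  by exists x.
case/(nthP 0): xt => q; rewrite size_take Hp => Hq Eq.
rewrite -Eq nth_take // in xle.
have [y yA yle] := IH q Hq (ltn_trans Hq Hp).
by exists y => //; apply: leq_trans yle _.
Qed.

Lemma above p : p < size r -> exists2 y, y \in B & nth 0 r p <= y.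
Proof.
move Ed: (size r - p) => d; elim/ltn_ind: d p Ed => d IH p Ed Hp.
have := ns (i := size A + p); rewrite leq_addr ltn_add2l => /(_ Hp).
rewrite /spf negb_or => /andP [_ H]; move: H.
rewrite /rlmax nth_addl -addnS drop_addl nth_cat Hp drop_catl' //.
case/allPn => x; rewrite mem_cat -leqNgt => /orP [xt xle|xB xle]; last by exists x.
case/(nthP 0): xt => q; rewrite size_drop => Hq Eq.
rewrite -Eq nth_drop in xle.
change (is_true (q < size r - p.+1)) in Hq. have Hq' : p.+1 + q < size r by lia.
have [y yB yle] := IH (size r - (p.+1 + q)) ltac:(lia) (p.+1 + q) erefl Hq'.
by exists y => //; apply: leq_trans yle.
Qed.
End Mid.

Lemma flags_inv A r r' B : perm_eq r r' ->
  (forall i, size A <= i < size A + size r -> ~~ spf (A ++ r ++ B) i) ->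
  forall i, spf (A ++ r' ++ B) i = spf (A ++ r ++ B) i.
Proof.
move=> pr ns i.
have sz : size r' = size r by rewrite (perm_size pr).
case: (ltnP i (size A)) => hA.
  rewrite /spf /lrmin /rlmax !nth_cat hA !take_catl' ?(ltnW hA) //.
  rewrite !drop_catl' //; congr (_ || _); apply: perm_all.
  by rewrite perm_cat2l perm_cat2r perm_sym.
case: (ltnP i (size A + size r)) => hB.
  have -> : spf (A ++ r ++ B) i = false by apply/negbTE/ns; rewrite hA hB.
  have {hA hB} [p -> Hp] : exists2 p, i = size A + p & p < size r.
    by exists (i - size A); lia.
  have : nth 0 r' p \in r by rewrite (perm_mem pr) mem_nth // sz.
  case/(nthP 0) => q Hq Eq.
  have [x xA xle] := below ns Hq.
  have [y yB yle] := above ns Hq.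
  rewrite /spf /lrmin /rlmax nth_addl nth_cat sz Hp take_addl -addnS drop_addl.
  rewrite drop_catl' ?sz //; apply/negP => /orP [] /allP.
    by move/(_ x); rewrite mem_cat xA -Eq => /(_ isT); rewrite ltnNge xle.
  by move/(_ y); rewrite !mem_cat yB orbT -Eq => /(_ isT); rewrite ltnNge yle.
have {hA hB} [p -> ] : exists p, i = size A + size r + p by exists (i - (size A + size r)); lia.
have L X : spf (A ++ X ++ B) (size A + size X + p) =
  all (fun x => nth 0 B p < x) (A ++ X ++ take p B) || all (fun x => x < nth 0 B p) (drop p.+1 B).
  by rewrite /spf /lrmin /rlmax -addnA nth_addl nth_addl take_addl take_addl -addnS drop_addl -addnS drop_addl.
rewrite -{1}sz !L; congr (_ || _); apply: perm_all; rewrite perm_cat2l perm_cat2r perm_sym //.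
Qed.

Definition isstart s t := (t == 0) || spf s t.-1.
Fixpoint st s i := if i is i'.+1 then (if spf s i' then i else st s i') else 0.

Lemma st_le s i : st s i <= i.
Proof. elim: i => //= i IH; case: ifP => // _; exact: leqW. Qed.

Lemma st_ns s i j : st s i <= j < i -> ~~ spf s j.
Proof.
elim: i => [|i IH] /=; first by rewrite ltn0.
case: ifP => H; first by move=> ?; lia.
case/andP => H1; rewrite ltnS leq_eqVlt => /orP [/eqP -> | H2]; first by rewrite H.
by apply: IH; rewrite H1.
Qed.

Lemma st_start s i : isstart s (st s i).
Proof. elim: i => //= i IH; case: ifP => // H; by rewrite /isstart /= H orbT. Qed.

Lemma st_eq s t i : isstart s t -> t <= i -> (forall j, t <= j < i -> ~~ spf s j) -> st s i = t.
Proof.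
elim: i => [|i IH] Hs; first by rewrite leqn0 => /eqP.
rewrite leq_eqVlt => /orP [/eqP Et | Hti] ns /=.
  move: Hs; rewrite /isstart Et /= => ->; by [].
have -> : spf s i = false by apply/negbTE/ns; lia.
apply: IH => // j /andP [H1 H2]; apply: ns; rewrite H1; exact: ltnW.
Qed.

Lemma st_ext s s' : (forall i, spf s' i = spf s i) -> forall i, st s' i = st s i.
Proof. move=> E; elim=> //= i ->; by rewrite E. Qed.

Definition rl s t := find (spf s) (iota t (size s - t)).

Lemma rl_ns s t i : t <= i < t + rl s t -> ~~ spf s i.
Proof.
case/andP => H1 H2.
have Hq : i - t < rl s t by lia.
have := before_find 0 Hq; rewrite nth_iota; last first.
  apply: leq_trans Hq _; rewrite /rl; apply: leq_trans (find_size _ _) _; by rewrite size_iota.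
by rewrite subnKC // => ->.
Qed.

Lemma rl_size s t : t + rl s t <= size s \/ size s < t.
Proof.
case: (ltnP (size s) t) => H; [by right | left].
have := find_size (spf s) (iota t (size s - t)); rewrite size_iota /rl; lia.
Qed.

Lemma rl_end s t : t + rl s t < size s -> spf s (t + rl s t).
Proof.
move=> H.
have Hh : has (spf s) (iota t (size s - t)) by rewrite has_find size_iota; move: H; rewrite /rl; lia.
have := nth_find 0 Hh; rewrite nth_iota; first by []. by move: Hh; rewrite has_find size_iota.
Qed.

Lemma st_run s t i : isstart s t -> t <= i < t + rl s t -> st s i = t.
Proof.
move=> Hs /andP [H1 H2]; apply: st_eq => // j /andP [Hj1 Hj2]; apply: (@rl_ns s t).
lia.
Qed.

Lemma in_run s t j : isstart s t -> ~~ spf s j -> st s j = t -> j < t + rl s t.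
Proof.
move=> Hs ns Ej; have jn := spf_small ns; have tj : t <= j by rewrite -Ej st_le.
rewrite ltnNge; apply/negP => H.
have H' : t + rl s t < size s by lia.
have := rl_end H'; apply/negP.
move: H; rewrite leq_eqVlt => /orP [/eqP -> //|H].
apply: (@st_ns s j); rewrite Ej leq_addr H //.
Qed.

Lemma st_block s j m : (forall a, a < m -> ~~ spf s (j + a)) -> forall a, a < m -> st s (j + a) = st s j.
Proof.
move=> ns a Ha; apply: st_eq; [exact: st_start | by apply: leq_trans (st_le s j) (leq_addr _ _) |].
move=> x /andP [H1 H2]; case: (ltnP x j) => Hx; first by apply: (@st_ns s j); rewrite H1.
have -> : x = j + (x - j) by lia.
apply: ns; lia.
Qed.

Lemma rl_ext s s' t : size s' = size s -> (forall i, spf s' i = spf s i) -> rl s' t = rl s t.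
Proof. by move=> Es E; rewrite /rl Es; apply: eq_find => i; rewrite E. Qed.


Definition biso (w x : seq nat) j := all (fun a => all (fun b =>
  (nth 0 x (j+a) < nth 0 x (j+b)) == (nth 0 w a < nth 0 w b)) (iota 0 (size w))) (iota 0 (size w)).
Definition badw w s j := [&& j + size w <= size s, all (fun i => ~~ spf s i) (iota j (size w)) & biso w s j].
Definition ccL w q := has (fun j => (j + size w <= size q) && biso w q j) (iota 0 (size q)).
Definition Av w1 w2 t s := all (fun j => ~~ badw (if st s j < t then w2 else w1) s j) (iota 0 (size s)).

Lemma biso_ext w x y j j' :
  (forall a b, a < size w -> b < size w ->
     (nth 0 x (j+a) < nth 0 x (j+b)) = (nth 0 y (j'+a) < nth 0 y (j'+b))) ->
  biso w x j = biso w y j'.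
Proof.
move=> E; rewrite /biso; apply: eq_in_all => a; rewrite mem_iota add0n => /andP [_ Ha].
apply: eq_in_all => b; rewrite mem_iota add0n => /andP [_ Hb]; by rewrite E.
Qed.

Lemma badw_ns w s j : badw w s j -> forall a, a < size w -> ~~ spf s (j + a).
Proof.
case/and3P => _ /allP H _ a Ha; apply: H; rewrite mem_iota; lia.
Qed.

Lemma biso_map (f : nat -> nat) w q o :
  {in q &, forall x y, (f x < f y) = (x < y)} -> o + size w <= size q ->
  biso w (map f q) o = biso w q o.
Proof.
move=> Hf Hs; apply: biso_ext => a b Ha Hb.
have Ha' : o + a < size q by lia.
have Hb' : o + b < size q by lia.
by rewrite !(nth_map 0) // Hf // mem_nth.
Qed.

Definition srt (r : seq nat) := sort leq r.
Definition std r := [seq index x (srt r) | x <- r].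
Definition Tm (b : seq nat -> seq nat) r := [seq nth 0 (srt r) i | i <- b (std r)].

Lemma size_srt r : size (srt r) = size r.
Proof. exact: size_sort. Qed.
Lemma mem_srt r : srt r =i r.
Proof. exact: mem_sort. Qed.
Lemma perm_srt r : perm_eq (srt r) r.
Proof. by rewrite /srt perm_sort. Qed.

Lemma srt_mono r i j : uniq r -> i < size r -> j < size r ->
  (nth 0 (srt r) i < nth 0 (srt r) j) = (i < j).
Proof.
move=> u Hi Hj.
have so : sorted ltn (srt r) by rewrite ltn_sorted_uniq_leq sort_uniq u sort_sorted //; exact: leq_total.
have Hm : forall i j, i < size r -> j < size r -> i < j -> nth 0 (srt r) i < nth 0 (srt r) j.
  move=> i' j' Hi' Hj' Hij; apply: (sorted_ltn_nth ltn_trans) => //; by rewrite inE size_srt.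
case: (ltngtP i j) => H; first exact: Hm.
  by apply/negbTE; rewrite -leqNgt ltnW // Hm.
by rewrite H ltnn.
Qed.

Lemma index_mono r : uniq r -> {in r &, forall x y, (index x (srt r) < index y (srt r)) = (x < y)}.
Proof.
move=> u x y Hx Hy.
have Hx' : x \in srt r by rewrite mem_srt.
have Hy' : y \in srt r by rewrite mem_srt.
rewrite -{2}(nth_index 0 Hx') -{2}(nth_index 0 Hy') srt_mono //.
  by rewrite -size_srt index_mem.
by rewrite -size_srt index_mem.
Qed.

Lemma std_perm r : uniq r -> perm_eq (std r) (iota 0 (size r)).
Proof.
move=> u; have us : uniq (srt r) by rewrite sort_uniq.
apply: (@perm_trans _ [seq index x (srt r) | x <- srt r]).
  by apply: perm_map; rewrite perm_sym perm_srt.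
have -> : [seq index x (srt r) | x <- srt r] = iota 0 (size r); last by [].
apply: (@eq_from_nth _ 0); first by rewrite size_map size_iota size_srt.
move=> i; rewrite size_map size_srt => Hi; rewrite (nth_map 0) ?size_srt // index_uniq ?size_srt // nth_iota //.
Qed.

Lemma Tm_perm b r : uniq r -> perm_eq (b (std r)) (iota 0 (size r)) -> perm_eq (Tm b r) r.
Proof.
move=> u H; apply: (@perm_trans _ [seq nth 0 (srt r) i | i <- iota 0 (size r)]).
  exact: perm_map.
by rewrite -size_srt -/(mkseq _ _) mkseq_nth perm_srt.
Qed.

Lemma recover r : uniq r -> [seq nth 0 (srt r) i | i <- std r] = r.
Proof.
move=> u; rewrite -map_comp; apply: map_id_in => x Hx /=.
by rewrite nth_index // mem_srt.
Qed.

Lemma biso_std w r o : uniq r -> o + size w <= size r -> biso w (std r) o = biso w r o.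
Proof. move=> u H; apply: biso_map => //; exact: index_mono. Qed.

Lemma biso_Tm b w r o : uniq r -> perm_eq (b (std r)) (iota 0 (size r)) ->
  o + size w <= size r -> biso w (Tm b r) o = biso w (b (std r)) o.
Proof.
move=> u H Ho; apply: biso_map; last by rewrite (perm_size H) size_iota.
move=> x y Hx Hy; apply: srt_mono => //.
  by move: Hx; rewrite (perm_mem H) mem_iota.
by move: Hy; rewrite (perm_mem H) mem_iota.
Qed.

Definition perms n := permutations (iota 0 n).

Lemma perms_size q l : q \in perms l -> size q = l.
Proof. by rewrite mem_permutations => /perm_size ->; rewrite size_iota. Qed.

Lemma perms_uniq q l : q \in perms l -> uniq q.
Proof. by rewrite mem_permutations => /perm_uniq ->; rewrite iota_uniq. Qed.

Section Beta.
Variables A1 A2 : pred (seq nat).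
Hypothesis H : forall l, count A1 (perms l) <= count A2 (perms l).
Definition beta q := nth q (filter A2 (perms (size q))) (index q (filter A1 (perms (size q)))).

Lemma beta_perm q : q \in perms (size q) -> beta q \in perms (size q).
Proof.
move=> Hq; rewrite /beta.
case: (ltnP (index q (filter A1 (perms (size q)))) (size (filter A2 (perms (size q))))) => Hi.
  by have := mem_nth q Hi; rewrite mem_filter => /andP [].
by rewrite nth_default.
Qed.

Lemma beta_in q : q \in perms (size q) -> A1 q -> (beta q \in perms (size q)) && A2 (beta q).
Proof.
move=> Hq Ha; rewrite /beta.
have Hi : index q (filter A1 (perms (size q))) < size (filter A2 (perms (size q))).
  rewrite size_filter; apply: leq_trans (H (size q)); rewrite -size_filter index_mem mem_filter Ha //.
by have := mem_nth q Hi; rewrite mem_filter => /andP [-> ->].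
Qed.

Lemma beta_inj q1 q2 : q1 \in perms (size q1) -> A1 q1 -> q2 \in perms (size q2) -> A1 q2 ->
  beta q1 = beta q2 -> q1 = q2.
Proof.
move=> H1 A1q1 H2 A1q2 E.
have S1 := perms_size (H1); have S2 := perms_size H2.
have [/andP [B1 _] /andP [B2 _]] := (beta_in H1 A1q1, beta_in H2 A1q2).
have El : size q1 = size q2 by rewrite -(perms_size B1) -(perms_size B2) E.
move: E; rewrite /beta El => E.
have I1 : index q1 (filter A1 (perms (size q2))) < size (filter A1 (perms (size q2))).
  by rewrite index_mem mem_filter A1q1 -El.
have I2 : index q2 (filter A1 (perms (size q2))) < size (filter A1 (perms (size q2))).
  by rewrite index_mem mem_filter A1q2.
rewrite size_filter in I1 I2.
have J1 := leq_trans I1 (H _); have J2 := leq_trans I2 (H _).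
rewrite -size_filter in J1 J2.
move: E; rewrite (set_nth_default q2 q1) // => /eqP; rewrite nth_uniq //; last first.
  by rewrite filter_uniq // permutations_uniq.
move=> /eqP Ei.
have M1 : q1 \in filter A1 (perms (size q2)) by rewrite mem_filter A1q1 -El.
have M2 : q2 \in filter A1 (perms (size q2)) by rewrite mem_filter A1q2.
by rewrite -(nth_index q1 M1) Ei nth_index.
Qed.
End Beta.


Lemma decomp (s : seq nat) t l : t + l <= size s ->
  s = take t s ++ take l (drop t s) ++ drop (t + l) s.
Proof. by move=> _; rewrite addnC -drop_drop !cat_take_drop. Qed.

Lemma count_inj (L : seq (seq nat)) (P Q : pred (seq nat)) (f : seq nat -> seq nat) :
  uniq L -> {in L, forall x, P x -> (f x \in L) && Q (f x)} ->
  {in [pred x in L | P x] &, injective f} -> count P L <= count Q L.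
Proof.
move=> uL Hf Hi; rewrite -!size_filter.
rewrite -(size_map f); apply: uniq_leq_size.
  rewrite map_inj_in_uniq ?filter_uniq // => x y; rewrite !mem_filter => /andP [Px Lx] /andP [Py Ly].
  by apply: Hi; rewrite inE ?Px ?Lx ?Py ?Ly.
move=> y /mapP [x]; rewrite mem_filter => /andP [Px Lx] ->.
by have /andP [H1 H2] := Hf x Lx Px; rewrite mem_filter H1 H2.
Qed.

Lemma map_nth_inj (V q1 q2 : seq nat) : uniq V -> all (fun i => i < size V) q1 ->
  all (fun i => i < size V) q2 -> size q1 = size q2 ->
  [seq nth 0 V i | i <- q1] = [seq nth 0 V i | i <- q2] -> q1 = q2.
Proof.
move=> uV /allP a1 /allP a2 Es E; apply: (@eq_from_nth _ 0) => // i Hi.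
have := congr1 (fun x => nth 0 x i) E; rewrite /= !(nth_map 0) -?Es // => /eqP.
have b1 := a1 _ (mem_nth 0 Hi).
have Hi2 : i < size q2 by rewrite -Es.
have b2 := a2 _ (mem_nth 0 Hi2).
by rewrite nth_uniq // => /eqP.
Qed.

Lemma nth_after (A X B : seq nat) x : nth 0 (A ++ X ++ B) (size A + size X + x) = nth 0 B x.
Proof. by rewrite -addnA !nth_addl. Qed.

Section Step.
Variables w1 w2 : seq nat.
Hypothesis hm1 : 0 < size w1.
Hypothesis hm2 : 0 < size w2.
Let A1 := fun q => ~~ ccL w1 q.
Let A2 := fun q => ~~ ccL w2 q.
Hypothesis Hc : forall l, count A1 (perms l) <= count A2 (perms l).
Let bt := beta A1 A2.

Definition G t s := if isstart s t && (t < size s) then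
  take t s ++ Tm bt (take (rl s t) (drop t s)) ++ drop (t + rl s t) s else s.

Section Fix.
Variables (s : seq nat) (t : nat).
Hypothesis us : uniq s.
Hypothesis Hst : isstart s t && (t < size s).
Local Notation l := (rl s t).
Local Notation r := (take (rl s t) (drop t s)).

Lemma tl_size : t + l <= size s.
Proof. case/andP: Hst => _ H; case: (rl_size s t) => [//|H2]; lia. Qed.
Lemma size_r : size r = l.
Proof. by rewrite size_take size_drop; have := tl_size; case: ifP; lia. Qed.
Lemma uniq_r : uniq r.
Proof. by rewrite take_uniq // drop_uniq. Qed.
Lemma std_r_perm : std r \in perms (size (std r)).
Proof. by rewrite mem_permutations size_map std_perm // uniq_r. Qed.
Lemma bt_perm : perm_eq (bt (std r)) (iota 0 (size r)).
Proof. have := beta_perm A1 A2 std_r_perm; by rewrite mem_permutations size_map. Qed.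
Lemma Tm_r_perm : perm_eq (Tm bt r) r.
Proof. apply: Tm_perm; [exact: uniq_r | exact: bt_perm]. Qed.

Lemma GE : G t s = take t s ++ Tm bt r ++ drop (t + l) s.
Proof. by rewrite /G Hst. Qed.

Lemma size_take_t : size (take t s) = t.
Proof. case/andP: Hst => _ H; rewrite size_take H //. Qed.

Lemma G_flags_st : forall i, spf (G t s) i = spf s i.
Proof.
rewrite GE; have -> : spf s = spf (take t s ++ r ++ drop (t + l) s) by rewrite -(decomp tl_size).
apply: flags_inv; first by rewrite perm_sym Tm_r_perm.
have E := decomp tl_size; rewrite -E size_take_t size_r => i Hi; exact: (rl_ns Hi).
Qed.

Lemma nth_G_out p : p < t \/ t + l <= p -> nth 0 (G t s) p = nth 0 s p.
Proof.
rewrite GE => -[H|H].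
  by rewrite nth_cat size_take_t H nth_take.
rewrite [in RHS](decomp tl_size).
have E1 : p = size (take t s) + size (Tm bt r) + (p - t - l).
  by rewrite size_take_t (perm_size Tm_r_perm) size_r; lia.
have E2 : p = size (take t s) + size r + (p - t - l) by rewrite size_take_t size_r; lia.
by rewrite {1}E1 {2}E2 !nth_after.
Qed.

Lemma nth_G_in o : o < l -> nth 0 (G t s) (t + o) = nth 0 (Tm bt r) o.
Proof.
move=> Ho; rewrite GE.
have -> : t + o = size (take t s) + o by rewrite size_take_t.
rewrite nth_addl nth_cat (perm_size Tm_r_perm) size_r Ho //.
Qed.

Lemma A1_std : Av w1 w2 t s -> A1 (std r).
Proof.
move=> Hav; have Hs0 := Hst; case/andP: Hs0 => Hi Ht.
rewrite /A1; apply/negP => /hasP [o]; rewrite mem_iota add0n => /andP [_ Ho] /andP [Hs Hb].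
rewrite size_map size_r in Hs.
rewrite biso_std ?uniq_r ?size_r // in Hb.
have tl := tl_size.
have Hb' : biso w1 s (t + o).
  suff <- : biso w1 (take (rl s t) (drop t s)) o = biso w1 s (t + o) by [].
  apply: biso_ext => a b Ha Hb0.
  rewrite !nth_take ?nth_drop ?addnA //; lia.
have Hj : t + o < size s by lia.
move/allP: Hav => /(_ (t+o)); rewrite mem_iota add0n Hj => /(_ isT).
rewrite (st_run Hi); last by lia.
rewrite ltnn /badw Hb' andbT; move/negP; apply; apply/andP; split; first by lia.
apply/allP => i; rewrite mem_iota => Hi'; apply: (@rl_ns s t); lia.
Qed.

End Fix.

Lemma badw_ext w x y j : size x = size y -> (forall i, spf x i = spf y i) ->
  (forall a, a < size w -> nth 0 x (j+a) = nth 0 y (j+a)) -> badw w x j = badw w y j.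
Proof.
move=> Es Ef En; rewrite /badw Es; congr [&& _, _ & _].
  by apply: eq_all => i; rewrite Ef.
by apply: biso_ext => a b Ha Hb; rewrite !En.
Qed.

Lemma G_flags s t : uniq s -> forall i, spf (G t s) i = spf s i.
Proof. move=> us; case Hst: (isstart s t && (t < size s)); first exact: G_flags_st. by rewrite /G Hst. Qed.

Lemma G_perm s t : uniq s -> perm_eq (G t s) s.
Proof.
move=> us; case Hst: (isstart s t && (t < size s)); last by rewrite /G Hst.
rewrite GE // [X in perm_eq _ X](decomp (tl_size us Hst)) perm_cat2l perm_cat2r; exact: Tm_r_perm.
Qed.

Lemma G_Av s t : uniq s -> Av w1 w2 t s -> Av w1 w2 t.+1 (G t s).
Proof.
move=> us Hav; have Fl := G_flags t us; have Est := st_ext Fl.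
have Sz : size (G t s) = size s by rewrite (perm_size (G_perm t us)).
apply/allP => j; rewrite mem_iota add0n Sz => /andP [_ Hj]; rewrite Est.
apply/negP; set W := (if st s j < t.+1 then w2 else w1) => Hbad.
have nsG := badw_ns Hbad.
have ns a (Ha : a < size W) : ~~ spf s (j+a) by rewrite -Fl nsG.
have HjW : j + size W <= size s by case/and3P: Hbad; rewrite Sz.
have hW : 0 < size W by rewrite /W; case: ifP.
have Eb := st_block ns.
case Hstj: (st s j == t).
  move/eqP: Hstj => Hstj.
  have Hs : isstart s t && (t < size s).
    by rewrite -Hstj st_start /=; exact: leq_ltn_trans (st_le s j) Hj.
  have EW : W = w2 by rewrite /W Hstj ltnSn.
  rewrite EW in Hbad ns HjW hW Eb.
  have tj : t <= j by rewrite -Hstj st_le.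
  have Hend : j + (size w2).-1 < t + rl s t.
    apply: in_run; [by case/andP: Hs | apply: ns; lia | rewrite Eb ?Hstj //; lia].
  have [o Eo] : exists o, j = t + o by exists (j - t); lia.
  have Ho : o + size w2 <= rl s t by lia.
  case/and3P: Hbad => _ _.
  have -> : biso w2 (G t s) j = biso w2 (Tm bt (take (rl s t) (drop t s))) o.
    rewrite Eo; apply: biso_ext => a b Ha Hb; rewrite -!addnA !nth_G_in //; lia.
  rewrite biso_Tm ?uniq_r ?bt_perm ?size_r //.
  have := beta_in Hc (@std_r_perm s t us) (A1_std us Hs Hav).
  case/andP => Pq; rewrite /A2 => /hasPn /(_ o).
  have Hsz : size (bt (std (take (rl s t) (drop t s)))) = rl s t.
    by rewrite (perm_size (@bt_perm s t us)) size_iota size_r.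
  rewrite mem_iota add0n Hsz Ho /=; move/(_ ltac:(lia)) => /negP; apply.
have Hne : st s j != t by rewrite Hstj.
have EW : W = (if st s j < t then w2 else w1).
  by rewrite /W ltnS leq_eqVlt (negbTE Hne).
move: Hbad; rewrite EW (badw_ext (y := s)) //.
- apply/negP; move/allP: Hav => /(_ j); rewrite mem_iota add0n Hj; exact.
- move=> a Ha; case Hs: (isstart s t && (t < size s)); last by rewrite /G Hs.
  apply: (@nth_G_out s t us Hs); rewrite -EW in Ha.
  case: (ltnP (j+a) t) => H1; [by left | right].
  rewrite leqNgt; apply/negP => H2.
  have := st_run (i := j + a) (proj1 (andP Hs)); rewrite H1 H2 Eb //.
  by move/(_ isT)/eqP; rewrite (negbTE Hne).
Qed.

Lemma G_inj s1 s2 t : uniq s1 -> uniq s2 -> Av w1 w2 t s1 -> Av w1 w2 t s2 ->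
  G t s1 = G t s2 -> s1 = s2.
Proof.
move=> u1 u2 Av1 Av2 E.
have F1 := G_flags t u1; have F2 := G_flags t u2.
have Fl : forall i, spf s1 i = spf s2 i by move=> i; rewrite -F1 -F2 E.
have Sz : size s1 = size s2.
  by rewrite -(perm_size (G_perm t u1)) -(perm_size (G_perm t u2)) E.
have Hs : (isstart s1 t && (t < size s1)) = (isstart s2 t && (t < size s2)).
  by rewrite /isstart Fl Sz.
have Rl : rl s1 t = rl s2 t by apply: rl_ext.
case H1: (isstart s1 t && (t < size s1)); last first.
  by move: E; rewrite /G H1 -Hs H1.
have H2 : isstart s2 t && (t < size s2) by rewrite -Hs.
move: E; rewrite GE // GE // => E.
have D1 := decomp (tl_size u1 H1); have D2 := decomp (tl_size u2 H2).
have Sr1 := size_r u1 H1; have Sr2 := size_r u2 H2.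
have P1 := @Tm_r_perm s1 t u1; have P2 := @Tm_r_perm s2 t u2.
move: E P1 D1 Sr1 (A1_std u1 H1 Av1) (@std_r_perm s1 t u1) (@bt_perm s1 t u1) (@uniq_r s1 t u1).
rewrite Rl => E P1 D1 Sr1 A11 SP1 BP1 U1.
move/eqP: E; rewrite eqseq_cat ?size_take_t // => /andP [/eqP Et].
rewrite eqseq_cat; last by rewrite (perm_size P1) (perm_size P2) Sr1 Sr2.
case/andP => /eqP TE /eqP Ed.
set r1 := take (rl s2 t) (drop t s1) in TE P1 Sr1 A11 SP1 BP1 U1 D1.
set r2 := take (rl s2 t) (drop t s2) in TE P2 Sr2 D2.
have Pr : perm_eq r1 r2 by apply: (perm_trans _ P2); rewrite -TE perm_sym.
have Srt : srt r1 = srt r2 by apply/perm_sortP => //; [exact: leq_total|exact: leq_trans|exact: anti_leq].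
have Eq : bt (std r1) = bt (std r2).
  move: TE; rewrite /Tm Srt; apply: map_nth_inj.
  - by rewrite sort_uniq uniq_r.
  - apply/allP => x; rewrite (perm_mem BP1) mem_iota size_srt (perm_size Pr); by rewrite add0n => /andP [].
  - apply/allP => x; rewrite (perm_mem (@bt_perm s2 t u2)) mem_iota size_srt; by rewrite add0n => /andP [].
  - by rewrite (perm_size BP1) (perm_size (@bt_perm s2 t u2)) !size_iota (perm_size Pr).
have Es : std r1 = std r2.
  apply: (beta_inj Hc SP1 A11 (@std_r_perm s2 t u2) (A1_std u2 H2 Av2) Eq).
have U2 : uniq r2 := @uniq_r s2 t u2.
have Er : r1 = r2 by rewrite -(recover U1) -(recover U2) Srt Es.
by rewrite [LHS]D1 [RHS]D2 Et Er Ed.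
Qed.

End Step.


Section Core.
Variables w1 w2 : seq nat.
Hypothesis hm1 : 0 < size w1.
Hypothesis hm2 : 0 < size w2.
Hypothesis Hc : forall l, count (fun q => ~~ ccL w1 q) (perms l) <= count (fun q => ~~ ccL w2 q) (perms l).

Lemma Av_step n t : count (Av w1 w2 t) (perms n) <= count (Av w1 w2 t.+1) (perms n).
Proof.
apply: (count_inj (f := G w1 w2 t)); first exact: permutations_uniq.
  move=> x Hx Ha; have ux := perms_uniq Hx; apply/andP; split.
    by move: Hx; rewrite !mem_permutations => P; exact: perm_trans (G_perm hm1 hm2 t ux) P.
  exact: (G_Av hm1 hm2 Hc ux Ha).
move=> x y /andP [Hx Ax] /andP [Hy Ay]; apply: (G_inj hm1 hm2 Hc (perms_uniq Hx) (perms_uniq Hy) Ax Ay).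
Qed.

Lemma Av_0 s : Av w1 w2 0 s = ~~ has (badw w1 s) (iota 0 (size s)).
Proof. by rewrite /Av -all_predC; apply: eq_all => j. Qed.

Lemma Av_n s : Av w1 w2 (size s) s = ~~ has (badw w2 s) (iota 0 (size s)).
Proof.
rewrite /Av -all_predC; apply: eq_in_all => j; rewrite mem_iota add0n => /andP [_ Hj] /=.
by rewrite (leq_ltn_trans (st_le s j) Hj).
Qed.

Theorem core n : count (fun s => ~~ has (badw w1 s) (iota 0 (size s))) (perms n) <=
                 count (fun s => ~~ has (badw w2 s) (iota 0 (size s))) (perms n).
Proof.
have H t : count (Av w1 w2 0) (perms n) <= count (Av w1 w2 t) (perms n).
  elim: t => // t IH; exact: leq_trans IH (Av_step n t).
have E0 : count (fun s => ~~ has (badw w1 s) (iota 0 (size s))) (perms n) = count (Av w1 w2 0) (perms n).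
  by apply: eq_count => s; rewrite Av_0.
have En : count (fun s => ~~ has (badw w2 s) (iota 0 (size s))) (perms n) = count (Av w1 w2 n) (perms n).
  apply: eq_in_count => s Hs; by rewrite -Av_n (perms_size Hs).
by rewrite E0 En.
Qed.
End Core.


Lemma cardP (T : finType) (P : pred T) : #|[set x | P x]| = count P (enum T).
Proof.
rewrite cardsE cardE /enum_mem size_filter -enumT.
have -> : [seq x <- enum T | mem T x] = enum T by apply/all_filterP/allP.
by [].
Qed.

Definition line n (p : 'S_n) : seq nat := [seq val (p i) | i <- enum 'I_n].

Lemma size_line n (p : 'S_n) : size (line p) = n.
Proof. by rewrite size_map size_enum_ord. Qed.

Lemma nth_line n (p : 'S_n) (i : 'I_n) : nth 0 (line p) i = p i.
Proof. by rewrite /line (nth_map i) ?size_enum_ord // nth_ord_enum. Qed.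

Lemma line_inj n : injective (@line n).
Proof.
move=> p1 p2 E; apply/permP => i; apply: ord_inj.
by rewrite -!nth_line E.
Qed.

Lemma line_perm n (p : 'S_n) : line p \in perms n.
Proof.
rewrite mem_permutations; apply: uniq_perm; last first.
- move=> x; rewrite mem_iota add0n /=; apply/idP/idP.
    by case/mapP => i _ ->; exact: ltn_ord.
  move=> Hx; apply/mapP; exists (p^-1 (Ordinal Hx))%g; first by rewrite mem_enum.
  by rewrite permKV.
- exact: iota_uniq.
rewrite map_inj_uniq ?enum_uniq // => i j /val_inj; exact: perm_inj.
Qed.

Lemma card_perms n (Q : pred (seq nat)) : #|[set p : 'S_n | Q (line p)]| = count Q (perms n).
Proof.
rewrite cardP -(count_map (@line n) Q).
have U : uniq [seq line p | p <- enum 'S_n] by rewrite map_inj_uniq ?enum_uniq //; exact: line_inj.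
have S : {subset [seq line p | p <- enum 'S_n] <= perms n} by move=> x /mapP [p _ ->]; exact: line_perm.
have Sz : size (perms n) <= size [seq line p | p <- enum 'S_n].
  by rewrite size_map -cardE card_Sn size_permutations ?iota_uniq // size_iota.
have [_ E] := uniq_min_size U S Sz.
have P : perm_eq [seq line p | p <- enum 'S_n] (perms n).
  by apply: uniq_perm => //; exact: permutations_uniq.
by move/seq.permP: P => ->.
Qed.

Lemma gcontainsP (P : gpat) n (p : 'S_n) :
  gcontains P p <-> exists g : nat -> nat, [/\ forall a, a < size P.1 -> g a < n,
    forall a b, a < b -> b < size P.1 -> g a < g b,
    forall a b, a < size P.1 -> b < size P.1 ->
      (nth 0 (line p) (g a) < nth 0 (line p) (g b)) = (nth 0 P.1 a < nth 0 P.1 b) &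
    forall a, a.+1 < size P.1 -> ~~ nth true P.2 a -> g a.+1 = (g a).+1].
Proof.
split.
  case/existsP => f /andP [/forallP H1 /forallP H2].
  pose g a := if insub a is Some o then val (f o) else 0.
  have gE a (Ha : a < size P.1) : g a = f (Ordinal Ha) by rewrite /g insubT.
  exists g; split.
  - by move=> a Ha; rewrite gE.
  - move=> a b Hab Hb; have Ha := ltn_trans Hab Hb.
    have /forallP /(_ (Ordinal Hb)) /andP [/implyP /(_ Hab) + _] := H1 (Ordinal Ha).
    by rewrite gE (gE b).
  - move=> a b Ha Hb; have /forallP /(_ (Ordinal Hb)) /andP [_ /eqP <-] := H1 (Ordinal Ha).
    by rewrite (gE a Ha) (gE b Hb) !nth_line.
  - move=> a Hb Hd; have Ha := ltn_trans (ltnSn a) Hb.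
    have /forallP /(_ (Ordinal Hb)) /implyP := H2 (Ordinal Ha).
    by rewrite /= eqxx Hd => /(_ isT) /eqP; rewrite (gE a Ha) (gE _ Hb).
case=> g [Hg Hm Ho Hd].
apply/existsP; exists [ffun o : 'I_(size P.1) => Ordinal (Hg o (ltn_ord o))].
apply/andP; split; apply/forallP => a; apply/forallP => b; rewrite !ffunE /=.
  apply/andP; split; first by apply/implyP => Hab; exact: Hm.
  apply/eqP; have := Ho a b (ltn_ord a) (ltn_ord b).
  by rewrite -(nth_line p (Ordinal (Hg a (ltn_ord a)))) -(nth_line p (Ordinal (Hg b (ltn_ord b)))).
apply/implyP => /andP [/eqP Eb Hn]; apply/eqP.
have Hb := ltn_ord b; rewrite Eb in Hb *.
exact: Hd.
Qed.


Lemma oneline_size m (s : 'S_m) : size (oneline s) = m.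
Proof. by rewrite size_map size_enum_ord. Qed.

Lemma oneline_nth m (s : 'S_m) a : a < m -> 0 < nth 0 (oneline s) a <= m.
Proof.
move=> Ha; rewrite /oneline (nth_map (Ordinal Ha)) ?size_enum_ord //=.
Qed.

Lemma mem_take_nth (s : seq nat) i p : p < i -> p < size s -> nth 0 s p \in take i s.
Proof.
move=> H1 H2; rewrite -(nth_take 0 H1); apply: mem_nth; rewrite size_take; case: ifP => //; lia.
Qed.

Lemma mem_drop_nth (s : seq nat) i p : i <= p -> p < size s -> nth 0 s p \in drop i s.
Proof.
move=> H1 H2; have -> : p = i + (p - i) by lia.
rewrite -nth_drop; apply: mem_nth; rewrite size_drop; exact: ltn_sub2r (leq_ltn_trans H1 H2) H2.
Qed.

Lemma consecP m (sg : 'S_m) n (p : 'S_n) : 0 < m ->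
  gcontains (consec_pat sg) p = ccL (oneline sg) (line p).
Proof.
move=> hm; apply/idP/idP.
  move/gcontainsP => [g [Hg Hm Ho Hd]]; move: Hg Hm Ho Hd; rewrite /= oneline_size => Hg Hm Ho Hd.
  have gE a : a < m -> g a = g 0 + a.
    elim: a => [|a IH] Ha; first by rewrite addn0.
    rewrite Hd // ?IH ?addnS //; [lia | rewrite nth_nseq; case: ifP => //; lia].
  apply/hasP; exists (g 0); first by rewrite mem_iota add0n size_line Hg.
  apply/andP; split.
    rewrite oneline_size size_line; have := Hg m.-1; rewrite gE; lia.
  rewrite /biso oneline_size; apply/allP => a; rewrite mem_iota add0n => /andP [_ Ha].
  apply/allP => b; rewrite mem_iota add0n => /andP [_ Hb].
  by rewrite -!gE // Ho.
case/hasP => j; rewrite mem_iota add0n size_line => /andP [_ Hj] /andP [Hs Hb0].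
rewrite oneline_size in Hs.
apply/gcontainsP; exists (fun a => j + a); rewrite /= oneline_size; split.
- move=> a Ha; lia.
- move=> a b Hab _; lia.
- move=> a b Ha Hb1; move/allP: Hb0 => /(_ a); rewrite mem_iota oneline_size Ha => /(_ isT).
  by move/allP => /(_ b); rewrite mem_iota Hb1 => /(_ isT) /eqP.
- by move=> a _ _; rewrite addnS.
Qed.

Lemma argmin (r : seq nat) : 0 < size r ->
  exists2 p, p < size r & forall q, q < size r -> nth 0 r p <= nth 0 r q.
Proof.
elim: r => // a r IH _; case: r IH => [|b r] IH.
  by exists 0 => // -[|q].
have [p Hp Hm] := IH isT.
case: (leqP a (nth 0 (b :: r) p)) => Ha.
  exists 0 => // -[|q] //= Hq; apply: leq_trans Ha (Hm _ _); exact: Hq.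
exists p.+1 => // -[|q] Hq; first exact: ltnW.
exact: Hm.
Qed.

Lemma argmax (r : seq nat) : 0 < size r ->
  exists2 p, p < size r & forall q, q < size r -> nth 0 r q <= nth 0 r p.
Proof.
elim: r => // a r IH _; case: r IH => [|b r] IH.
  by exists 0 => // -[|q].
have [p Hp Hm] := IH isT.
case: (leqP (nth 0 (b :: r) p) a) => Ha.
  exists 0 => // -[|q] //= Hq; apply: leq_trans (Hm _ _) Ha; exact: Hq.
exists p.+1 => // -[|q] Hq; first exact: ltnW.
exact: Hm.
Qed.

Lemma nth_tail_true c b : nth true (nseq c false ++ [:: true]) b = (c <= b).
Proof.
rewrite nth_cat size_nseq nth_nseq; case: ltnP => H; first by [].
by case: (b - c) => [|[|x]].
Qed.

Lemma wrapP k (sg : 'S_(k-2)) n (p : 'S_n) : 2 < k ->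
  gcontains (wrap_pat sg) p = has (badw (oneline sg) (line p)) (iota 0 n).
Proof.
move=> hk.
have hm : 0 < k - 2 by lia.
have sws : size (oneline sg) = k - 2 := oneline_size sg.
have wsb a : a < k - 2 -> 0 < nth 0 (oneline sg) a <= k - 2 := @oneline_nth _ sg a.
have sw : size (wrap_pat sg).1 = (k - 2).+2 by rewrite /= size_cat size_map sws /=; lia.
have w0 : nth 0 (wrap_pat sg).1 0 = 1 by [].
have wmid a : a < k - 2 -> nth 0 (wrap_pat sg).1 a.+1 = (nth 0 (oneline sg) a).+1.
  by move=> Ha; rewrite /= nth_cat size_map sws Ha (nth_map 0) ?sws.
have wlast : nth 0 (wrap_pat sg).1 (k - 2).+1 = (k - 2).+2.
  by rewrite /= nth_cat size_map sws ltnn subnn /=; lia.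
have d0 : nth true (wrap_pat sg).2 0 = true by [].
have dS a : nth true (wrap_pat sg).2 a.+1 = ((k - 2).-1 <= a).
  by rewrite /= nth_tail_true; congr (_ <= _); lia.
set m := k - 2 in hm sws wsb sw wmid wlast dS *.
set ws := oneline sg in sws wsb wmid *.
have ss : size (line p) = n := size_line p.
have us : uniq (line p) := perms_uniq (line_perm p).
set s := line p in ss us *.
apply/idP/idP.
- move/gcontainsP => [g [Hg Hm Ho Hd]]; rewrite sw in Hg Hm Ho Hd.
  have gE t : t < m -> g t.+1 = g 1 + t.
    elim: t => [|t IH] Ht; first by rewrite addn0.
    have Ht' : t < m by lia.
    rewrite Hd; first by rewrite IH // addnS.
      lia.
    rewrite dS; lia.
  set j := g 1 in gE *.
  have g0j : g 0 < j by apply: Hm.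
  have gm : g m = j + m.-1.
    by have := gE m.-1; rewrite prednK //; apply; lia.
  have gl : g m < g m.+1 by apply: Hm.
  have gln : g m.+1 < n by apply: Hg.
  have L1 t : t < m -> nth 0 s (g 0) < nth 0 s (j + t).
    move=> Ht; rewrite -gE // Ho //; last by lia.
    by rewrite w0 wmid // ltnS; case/andP: (wsb t Ht).
  have L2 t : t < m -> nth 0 s (j + t) < nth 0 s (g m.+1).
    move=> Ht; rewrite -gE // Ho //; last by lia.
    by rewrite wmid // wlast ltnS; case/andP: (wsb t Ht).
  apply/hasP; exists j; first by rewrite mem_iota add0n; lia.
  apply/and3P; split.
  + rewrite sws ss; lia.
  + apply/allP => i; rewrite mem_iota sws => /andP [H1 H2].
    have [t Et Ht] : exists2 t, i = j + t & t < m by exists (i - j); lia.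
    rewrite Et /spf negb_or; apply/andP; split.
      have M : nth 0 s (g 0) \in take (j + t) s by apply: mem_take_nth; lia.
      apply/negP => /allP /(_ _ M).
      by rewrite ltnNge ltnW // L1.
    have M : nth 0 s (g m.+1) \in drop (j + t).+1 s by apply: mem_drop_nth; lia.
    apply/negP => /allP /(_ _ M).
    by rewrite ltnNge ltnW // L2.
  + rewrite /biso sws; apply/allP => a; rewrite mem_iota add0n => /andP [_ Ha].
    apply/allP => b; rewrite mem_iota add0n => /andP [_ Hb].
    rewrite -!gE // Ho ?(wmid a Ha) ?(wmid b Hb) ?ltnS //; lia.
case/hasP => j; rewrite mem_iota add0n => /andP [_ Hj] /and3P [Hs Hns Hb0].
have [j' Ej] : exists j' : nat, j = j' by exists j.
subst j; rename j' into j.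
rewrite sws in Hs Hns Hb0.
have Hs' : j + m <= n by move: Hs; rewrite ss.
have D := decomp Hs.
have sA : size (take j s) = j by rewrite size_takel //; lia.
have sr : size (take m (drop j s)) = m by rewrite size_takel // size_drop; lia.
have rE t : t < m -> nth 0 (take m (drop j s)) t = nth 0 s (j + t).
  by move=> Ht; rewrite nth_take // nth_drop.
have ns : forall i, size (take j s) <= i < size (take j s) + size (take m (drop j s)) ->
    ~~ spf (take j s ++ take m (drop j s) ++ drop (j + m) s) i.
  rewrite -D sA sr => i Hi; move/allP: Hns => /(_ i); rewrite mem_iota; exact.
have [pm Hpm Hmin] := @argmin (take m (drop j s)) ltac:(by rewrite sr).
have [pM HpM Hmax] := @argmax (take m (drop j s)) ltac:(by rewrite sr).
have [x xA xle] := below ns Hpm.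
have [y yB yle] := above ns HpM.
case/(nthP 0): xA => q0; rewrite sA => Hq0 Ex.
case/(nthP 0): yB => q1; rewrite size_drop => Hq1 Ey.
rewrite nth_take // in Ex; rewrite nth_drop in Ey.
rewrite sr in Hpm HpM.
have Lx t : t < m -> nth 0 s q0 < nth 0 s (j + t).
  move=> Ht; rewrite ltn_neqAle; apply/andP; split.
    rewrite nth_uniq //; try lia.
  rewrite Ex -rE //; apply: leq_trans xle _; apply: Hmin; by rewrite sr.
have Ly t : t < m -> nth 0 s (j + t) < nth 0 s (j + m + q1).
  move=> Ht; rewrite ltn_neqAle; apply/andP; split.
    rewrite nth_uniq //; try lia.
  rewrite Ey -rE //; apply: leq_trans _ yle; apply: Hmax; by rewrite sr.
have Hl : j + m + q1 < n by move: Hq1; rewrite ss; lia.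
pose g := fun a => if a == 0 then q0 else if a <= m then j + a.-1 else j + m + q1.
have g0 : g 0 = q0 by [].
have gmid a : a < m -> g a.+1 = j + a by move=> Ha; rewrite /g /= Ha.
have glast : g m.+1 = j + m + q1 by rewrite /g /= ltnn.
have gcase a : a < m.+2 -> a = 0 \/ (exists2 b, a = b.+1 & b < m) \/ a = m.+1.
  case: a => [|a] Ha; [by left | right].
  case: (ltnP a m) => H; [left; by exists a | right; congr _.+1; lia].
apply/gcontainsP; exists g.
rewrite sw; split.
- move=> a /gcase [->|[[b -> Hb]|->]]; rewrite ?g0 ?glast ?gmid //; lia.
- move=> a b Hab Hb; have Ha : a < m.+2 by lia.
  case/gcase: Ha => [Ea|[[a' Ea Ha']|Ea]]; case/gcase: Hb => [Eb|[[b' Eb Hb']|Eb]]; subst a b;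
    rewrite ?g0 ?glast ?gmid //; lia.
- move=> a b /gcase [Ea|[[a' Ea Ha]|Ea]] /gcase [Eb|[[b' Eb Hb]|Eb]]; subst a b.
  + by rewrite g0 !ltnn.
  + by rewrite g0 (gmid b' Hb) w0 (wmid b' Hb) Lx // ltnS; case/andP: (wsb b' Hb).
  + by rewrite g0 glast w0 wlast (ltn_trans (Lx 0 hm) (Ly 0 hm)).
  + by rewrite g0 (gmid a' Ha) w0 (wmid a' Ha) ltnNge ltnW ?Lx.
  + rewrite (gmid a' Ha) (gmid b' Hb) (wmid a' Ha) (wmid b' Hb) ltnS.
    move/allP: Hb0 => /(_ a'); rewrite mem_iota add0n sws Ha => /(_ isT) /allP /(_ b').
    by rewrite mem_iota add0n Hb => /(_ isT) /eqP ->.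
  + by rewrite (gmid a' Ha) glast (wmid a' Ha) wlast Ly // ltnS; case/andP: (wsb a' Ha).
  + by rewrite g0 glast w0 wlast ltnNge ltnW // (ltn_trans (Lx 0 hm) (Ly 0 hm)).
  + rewrite (gmid b' Hb) glast (wmid b' Hb) wlast ltnNge ltnW ?Ly //; symmetry; apply/negbTE; rewrite -leqNgt; have := wsb b' Hb; lia.
  + by rewrite glast !ltnn.
- move=> [|a] Ha; first by rewrite d0.
  rewrite dS -ltnNge => Ham.
  by rewrite !gmid ?addnS //; lia.
Qed.


Lemma egf_alpha (P Q : gpat) : egf P = egf Q -> forall l, alpha P l = alpha Q l.
Proof.
move=> E l; have := congr1 (fun f => f l) E; rewrite /egf => /(congr1 (fun x => (x * (l`!)%:R)%R)).
have nz : ((l`!)%:R != 0 :> rat)%R by rewrite Num.Theory.pnatr_eq0 -lt0n fact_gt0.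
rewrite !(GRing.mulfVK nz) => /eqP; rewrite Num.Theory.eqr_nat => /eqP.
exact.
Qed.

Lemma alpha_egf (P Q : gpat) : (forall l, alpha P l = alpha Q l) -> egf P = egf Q.
Proof. move=> E; apply: functional_extensionality => l; by rewrite /egf E. Qed.

Lemma alpha_count (P : gpat) n (Q : pred (seq nat)) :
  (forall p : 'S_n, gcontains P p = Q (line p)) -> alpha P n = count (fun s => ~~ Q s) (perms n).
Proof.
move=> H; rewrite /alpha -(card_perms n (fun s => ~~ Q s)); apply: eq_card => p.
by rewrite !inE H.
Qed.

Lemma wrap_count k (sg : 'S_(k-2)) n : 2 < k ->
  alpha (wrap_pat sg) n = count (fun s => ~~ has (badw (oneline sg) s) (iota 0 (size s))) (perms n).
Proof.
move=> hk; rewrite (alpha_count (Q := fun s => has (badw (oneline sg) s) (iota 0 n))).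
  by apply: eq_in_count => s Hs; rewrite (perms_size Hs).
by move=> p; rewrite wrapP.
Qed.

Lemma consec_count m (sg : 'S_m) n : 0 < m ->
  alpha (consec_pat sg) n = count (fun q => ~~ ccL (oneline sg) q) (perms n).
Proof. by move=> hm; apply: alpha_count => p; rewrite consecP. Qed.

Lemma part1 k : 3 <= k -> forall sg tau : 'S_(k - 2),
  (forall l, count (fun q => ~~ ccL (oneline sg) q) (perms l) =
             count (fun q => ~~ ccL (oneline tau) q) (perms l)) ->
  egf (wrap_pat sg) = egf (wrap_pat tau).
Proof.
move=> hk sg tau E; apply: alpha_egf => n.
have hm : 0 < size (oneline sg) by rewrite oneline_size; lia.
have hm' : 0 < size (oneline tau) by rewrite oneline_size; lia.
rewrite !wrap_count //; apply/eqP; rewrite eqn_leq; apply/andP; split.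
  by apply: core => // l; rewrite E.
by apply: core => // l; rewrite E.
Qed.

Definition cmp (q : seq nat) := [seq (size q).-1 - x | x <- q].

Lemma cmp_perm l q : q \in perms l -> cmp q \in perms l.
Proof.
move=> Hq; have Sq := perms_size Hq; have Uq := perms_uniq Hq.
have Mq x : x \in q -> x < l by move: Hq; rewrite mem_permutations => /perm_mem ->; rewrite mem_iota.
rewrite mem_permutations; apply: uniq_perm.
- rewrite map_inj_in_uniq // => x y Hx Hy; have := Mq x Hx; have := Mq y Hy; rewrite Sq; lia.
- exact: iota_uniq.
move=> x; rewrite mem_iota add0n /=; apply/mapP/idP => [[y Hy ->]|Hx].
  have := Mq y Hy; rewrite Sq; lia.
exists (l.-1 - x); last by rewrite Sq; lia.
by move: Hq; rewrite mem_permutations => /perm_mem ->; rewrite mem_iota; lia.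
Qed.

Lemma cmpK l q : q \in perms l -> cmp (cmp q) = q.
Proof.
move=> Hq; have Sq := perms_size Hq.
have Mq x : x \in q -> x < l by move: Hq; rewrite mem_permutations => /perm_mem ->; rewrite mem_iota.
rewrite /cmp size_map -map_comp; apply: map_id_in => x Hx /=; have := Mq x Hx; rewrite Sq; lia.
Qed.

Lemma cmp_cc l q : q \in perms l -> ccL [:: 2; 1] (cmp q) = ccL [:: 1; 2] q.
Proof.
move=> Hq; have Sq := perms_size Hq.
have Mq x : x \in q -> x < l by move: Hq; rewrite mem_permutations => /perm_mem ->; rewrite mem_iota.
rewrite /ccL /cmp size_map; apply: eq_in_has => j; rewrite mem_iota => _ /=.
case: (ltnP (size q) (j + 2)) => H; first by [].
have E a : a < 2 -> nth 0 [seq (size q).-1 - x | x <- q] (j + a) = (size q).-1 - nth 0 q (j + a).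
  by move=> Ha; rewrite (nth_map 0) //; apply: leq_trans H; rewrite ltn_add2l.
have B a : a < 2 -> nth 0 q (j + a) < size q.
  move=> Ha; rewrite -Sq in Mq; apply: Mq; apply: mem_nth; apply: leq_trans H; by rewrite ltn_add2l.
rewrite /biso /= !E // !addn0.
have := B 0 isT; have := B 1 isT; rewrite !addn0.
move: (nth 0 q j) (nth 0 q (j + 1)) => u v Hv Hu.
have -> : ((size q).-1 - u < (size q).-1 - v) = (v < u) by apply/idP/idP; lia.
have -> : ((size q).-1 - v < (size q).-1 - u) = (u < v) by apply/idP/idP; lia.
by rewrite !ltnn; case: (v < u); case: (u < v).
Qed.

Lemma c12 l : count (fun q => ~~ ccL [:: 1; 2] q) (perms l) = count (fun q => ~~ ccL [:: 2; 1] q) (perms l).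
Proof.
apply/eqP; rewrite eqn_leq; apply/andP; split.
  apply: (count_inj (f := cmp)); first exact: permutations_uniq.
    by move=> x Hx Px; rewrite (cmp_perm Hx) (cmp_cc Hx).
  move=> x y /andP [Hx _] /andP [Hy _] E; by rewrite -(cmpK Hx) E (cmpK Hy).
apply: (count_inj (f := cmp)); first exact: permutations_uniq.
  move=> x Hx Px; rewrite (cmp_perm Hx) /=; rewrite -(cmpK Hx) in Px.
  by rewrite -(cmp_cc (cmp_perm Hx)).
move=> x y /andP [Hx _] /andP [Hy _] E; by rewrite -(cmpK Hx) E (cmpK Hy).
Qed.

Lemma enum2 : enum 'I_(4-2) = [:: ord0; ord_max].
Proof. by apply: (inj_map val_inj); rewrite val_enum_ord. Qed.
Lemma one12 : oneline (1 : 'S_(4-2)) = [:: 1; 2].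
Proof. by rewrite /oneline enum2 /= !perm1. Qed.
Lemma one21 : oneline (tperm (ord0 : 'I_(4-2)) (ord_max)) = [:: 2; 1].
Proof. by rewrite /oneline enum2 /= tpermL tpermR. Qed.

Theorem mainTheorem14 :
  (forall (k : nat), (3 <= k)%N ->
    forall sigma tau : 'S_(k - 2),
      egf (consec_pat sigma) = egf (consec_pat tau) ->
      egf (wrap_pat sigma) = egf (wrap_pat tau)) /\
  egf ([:: 1; 2; 3; 4], [:: true; false; true]) =
  egf ([:: 1; 3; 2; 4], [:: true; false; true]).
Proof.
have P1 : forall (k : nat), (3 <= k)%N ->
    forall sigma tau : 'S_(k - 2),
      egf (consec_pat sigma) = egf (consec_pat tau) ->
      egf (wrap_pat sigma) = egf (wrap_pat tau).
  move=> k hk sg tau E; apply: part1 => // l.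
  have hm : 0 < k - 2 by lia.
  by rewrite -!consec_count // (egf_alpha E).
split; first exact: P1.
have W1 : @wrap_pat 4 1 = ([:: 1;2;3;4], [:: true;false;true]) by rewrite /wrap_pat one12.
have W2 : @wrap_pat 4 (tperm ord0 ord_max) = ([:: 1;3;2;4], [:: true;false;true]).
  by rewrite /wrap_pat one21.
rewrite -W1 -W2; apply: P1 => //; apply: alpha_egf => l.
by rewrite !consec_count // one12 one21 c12.
Qed.
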